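(* With the notation of the context, for all fixed frequencies, $$|S^{\rm bad}_{kk_2}|\lesssim(N_1\wedge N_3)^{1-\frac\alpha2},\qquad |S^{\rm bad}_{k_1k_3}|\lesssim(N\wedge N_2)^{1-\frac\alpha2};$$ consequently $|S_{kk_2}|\lesssim(N_1\wedge N_3)^{1-\frac\alpha2}$ and $|S_{k_1k_3}|\lesssim(N\wedge N_2)^{1-\frac\alpha2}$.
   Context: Fix $\alpha\in(1,2)$, dyadic numbers $1\le N_1,N_2,N_3\le N$, a real number $m$ and a constant $C_0>0$. Let $S$ be the set of $(k,k_1,k_2,k_3)\in\mathbb Z^4$ with $k=k_1-k_2+k_3$, $k_2\notin\{k_1,k_3\}$, $\big||k_1|^\alpha-|k_2|^\alpha+|k_3|^\alpha-|k|^\alpha-m\big|\le C_0$, $|k|\le N$ and $|k_j|\le N_j$ for $j=1,2,3$. Let $S_{k_1k_3}=\{(k,k_2):(k,k_1,k_2,k_3)\in S\}$ and $S_{kk_2}=\{(k_1,k_3):(k,k_1,k_2,k_3)\in S\}$. Fix a small absolute constant $c\in(0,1)$ and set $S^{\rm bad}_{k_1k_3}=\{(k,k_2)\in S_{k_1k_3}:|2k-(k_1+k_3)|<c|k_1+k_3|\}$, $S^{\rm good}_{k_1k_3}=S_{k_1k_3}\setminus S^{\rm bad}_{k_1k_3}$, $S^{\rm bad}_{kk_2}=\{(k_1,k_3)\in S_{kk_2}:|2k_1-(k+k_2)|<c|k+k_2|\}$, $S^{\rm good}_{kk_2}=S_{kk_2}\setminus S^{\rm bad}_{kk_2}$. $|A|$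 is cardinality, $a\wedge b=\min(a,b)$. $A\lesssim B$ means $A\le CB$ with $C$ depending only on $\alpha$, $c$ and $C_0$. *)

(* Defs.v *)
From HB Require Import structures.
From mathcomp Require Import all_boot all_order all_algebra.
From mathcomp Require Import reals exp.
Set Implicit Arguments. Unset Strict Implicit. Unset Printing Implicit Defensive.
Import Order.TTheory GRing.Theory Num.Theory.
Local Open Scope ring_scope.

Definition dyadic (N : nat) : Prop := exists n : nat, N = (2 ^ n)%N.

Definition zrange (n : nat) : seq int :=
  [seq (i%:Z - n%:Z) | i <- iota 0 (2 * n).+1].

Section Sets.
Variables (R : realType) (alpha m C0 c : R) (N N1 N2 N3 : nat).

(* |x|^alpha for an integer x (with 0^alpha = 0 since alpha <> 0) *)
Definition apow (x : int) : R := powR (`|x|%:~R) alpha.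

Definition inS (k k1 k2 k3 : int) : bool :=
  [&& k == k1 - k2 + k3, k2 != k1, k2 != k3,
      `| apow k1 - apow k2 + apow k3 - apow k - m | <= C0,
      `|k| <= N%:Z, `|k1| <= N1%:Z, `|k2| <= N2%:Z & `|k3| <= N3%:Z].

(* S_{k k2} = {(k1,k3) : (k,k1,k2,k3) \in S}, as a duplicate-free list *)
Definition S_kk2 (k k2 : int) : seq (int * int) :=
  [seq p <- [seq (a, b) | a <- zrange N1, b <- zrange N3] | inS k p.1 k2 p.2].

(* S_{k1 k3} = {(k,k2) : (k,k1,k2,k3) \in S}, as a duplicate-free list *)
Definition S_k1k3 (k1 k3 : int) : seq (int * int) :=
  [seq p <- [seq (a, b) | a <- zrange N, b <- zrange N2] | inS p.1 k1 p.2 k3].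

Definition S_kk2_bad (k k2 : int) : seq (int * int) :=
  [seq p <- S_kk2 k k2 | (`|2 * p.1 - (k + k2)|%:~R : R) < c * (`|k + k2|%:~R)].

Definition S_k1k3_bad (k1 k3 : int) : seq (int * int) :=
  [seq p <- S_k1k3 k1 k3 | (`|2 * p.1 - (k1 + k3)|%:~R : R) < c * (`|k1 + k3|%:~R)].

End Sets.

(* Main.v *)
Require Import Defs.
From HB Require Import structures.
From mathcomp Require Import all_boot all_order all_algebra.
From mathcomp Require Import reals exp.
From mathcomp Require Import ring lra zify.
Import Order.TTheory GRing.Theory Num.Theory.
Local Open Scope ring_scope.
Set Implicit Arguments. Unset Strict Implicit.

Lemma finalg (R : realType) (k C0 P Q E K1 d : R) : 0 < k -> 0 <= C0 -> 0 <= Q -> P * Q = 1 ->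
  k * d ^+ 2 * P <= 2 * C0 -> Q <= 4 * E ^+ 2 -> 8 * C0 / k <= K1 -> 1 <= K1 ->
  0 <= E -> 0 <= d -> d <= K1 * E.
Proof.
move=> k0 C00 Q0 PQ H QE K1d K11 E0 d0.
have s1 : d ^+ 2 <= 2 * C0 * Q / k.
  rewrite ler_pdivlMr //.
  have -> : d ^+ 2 * k = k * d ^+ 2 * P * Q by rewrite -mulrA PQ mulr1 mulrC.
  exact: ler_wpM2r.
have s2 : 2 * C0 * Q / k <= 8 * C0 / k * E ^+ 2.
  have -> : 8 * C0 / k * E ^+ 2 = 2 * C0 * (4 * E ^+ 2) / k by field; rewrite gt_eqF.
  apply: ler_wpM2r; first by rewrite invr_ge0 ltW.
  apply: ler_wpM2l => //; lra.
have s3 : 8 * C0 / k * E ^+ 2 <= (K1 * E) ^+ 2.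
  rewrite exprMn; apply: ler_wpM2r; first exact: sqr_ge0.
  apply: (le_trans K1d); rewrite expr2 -{1}[K1]mulr1; apply: ler_wpM2l; lra.
have := le_trans s1 (le_trans s2 s3).
have KE : 0 <= K1 * E by apply: mulr_ge0; lra.
by rewrite ler_sqr ?nnegrE.
Qed.

Section An.
Variable R : realType.

Lemma T1 (p x y : R) : 1 < p -> 0 <= x -> 0 <= y ->
  p * x * powR y (p-1) <= powR x p + (p-1) * powR y p.
Proof.
move=> p1 x0 y0.
have p0 : 0 < p by lra.
have pm0 : 0 < p - 1 by lra.
have q0 : 0 < p / (p - 1) by rewrite divr_gt0.
have := @conjugate_powR R x (powR y (p-1)) p (p/(p-1)) x0 (powR_ge0 _ _) p0 q0.
rewrite -powRrM mulrCA divff ?gt_eqF // mulr1 invf_div => H.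

have /H {}H : p^-1 + (p - 1) / p = 1 by field; rewrite gt_eqF.
have E : p * (powR x p / p + powR y p * ((p - 1) / p)) = powR x p + (p-1) * powR y p.
  by field; rewrite ?gt_eqF.
by rewrite -E -mulrA ler_pM2l.
Qed.

Lemma Dlo (p u v : R) : 1 < p -> 0 <= u -> u <= v ->
  p * powR u (p-1) * (v - u) <= powR v p - powR u p.
Proof.
move=> p1 u0 uv.
have v0 : 0 <= v by apply: le_trans uv.
have := @T1 p v u p1 v0 u0.
rewrite -(mulr_powRB1 u0 (_ : 0 < p)); last by lra.
move: (powR u (p-1)) => Y. move: (powR v p) => V. move=> H. nra.
Qed.

Lemma Dhi (p u v : R) : 1 < p -> 0 <= u -> u <= v ->
  powR v p - powR u p <= p * powR v (p-1) * (v - u).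
Proof.
move=> p1 u0 uv.
have v0 : 0 <= v by apply: le_trans uv.
have := @T1 p u v p1 u0 v0.
rewrite -(mulr_powRB1 v0 (_ : 0 < p)); last by lra.
move: (powR v (p-1)) => Y. move: (powR u p) => U. move=> H. nra.
Qed.

Lemma Ecv (b u v : R) : 0 < b < 1 -> 0 <= u -> 0 < v ->
  b * powR v (b-1) * (v - u) <= powR v b - powR u b.
Proof.
move=> /andP[b0 b1] u0 v0.
have ib1 : 1 < b^-1 by rewrite invf_gt1.
have := @T1 _ _ _ ib1 (powR_ge0 u b) (powR_ge0 v b).
rewrite -!powRrM mulfV ?gt_eqF // !powRr1 ?(ltW v0) //.
have -> : b * (b^-1 - 1) = 1 - b by field; rewrite gt_eqF.
have vinv : powR v (1 - b) * powR v (b - 1) = 1.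
  rewrite -powRD; last by rewrite (gt_eqF v0) implybT.
  by rewrite addrA subrK subrr powRr0.
have vb : v * powR v (b-1) = powR v b by rewrite mulr_powRB1 // ltW.
have Y0 : 0 < powR v (b-1) by rewrite powR_gt0.
move: (powR v (1-b)) (powR v (b-1)) (powR v b) (powR u b) vinv vb Y0 => Z Y V U vinv vb Y0 H.
have H2 : b * (b^-1 * U * Z) * Y <= b * (u + (b^-1 - 1) * v) * Y.
  by rewrite ler_pM2r // ler_pM2l.
have E1 : b * (b^-1 * U * Z) * Y = U.
  by rewrite -[RHS]mulr1 -vinv; field; rewrite gt_eqF.
have E2 : b * (u + (b^-1 - 1) * v) * Y = b * u * Y + (1 - b) * V.
  by rewrite -vb; field; rewrite gt_eqF.
rewrite E1 E2 in H2. rewrite -vb. nra.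
Qed.

Lemma NM (x y r : R) : 0 < x -> x <= y -> r <= 0 -> powR y r <= powR x r.
Proof.
move=> x0 xy r0.
have y0 : 0 < y by apply: lt_le_trans xy.
have -> : r = - (- r) by rewrite opprK.
move: (- r) (ltac:(lra) : 0 <= - r) => q q0.
rewrite !powRN lef_pV2 ?posrE ?powR_gt0 //.
by apply: (@ge0_ler_powR _ q) => //; rewrite nnegrE ltW.
Qed.

Variable a : R.
Hypothesis a1 : 1 < a.
Hypothesis a2 : a < 2.

Definition G (W t : R) := powR `|W + t| a + powR `|W - t| a.

Lemma RI1 (W x y : R) : 0 <= x -> x <= y -> y <= W ->
  2 * a * (a - 1) * (y - x) * x * powR (W + x) (a - 2) <= G W y - G W x.
Proof.
move=> x0 xy yW.
have a1' := a1; have a2' := a2.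
rewrite /G !ger0_norm; try lra.
have A1 := @Dlo a (W + x) (W + y) a1 (ltac:(lra)) (ltac:(lra)).
have A2 := @Dhi a (W - y) (W - x) a1 (ltac:(lra)) (ltac:(lra)).
have A3 : (a - 1) * powR (W + x) (a - 2) * (2 * x) <=
          powR (W + x) (a - 1) - powR (W - x) (a - 1).
  have [->|xp] := eqVneq x 0.
    by rewrite !mulr0 subr0 addr0 subrr.
  have xpos : 0 < x by rewrite lt_neqAle eq_sym xp x0.
  have h1 : 0 < a - 1 < 1 by apply/andP; split; lra.
  have h2 : 0 <= W - x by lra.
  have h3 : 0 < W + x by lra.
  have := @Ecv (a - 1) (W - x) (W + x) h1 h2 h3.
  have -> : a - 1 - 1 = a - 2 by ring.
  by have -> : W + x - (W - x) = 2 * x by ring.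
have P0 : 0 <= powR (W + x) (a - 2) by apply: powR_ge0.
move: A1 A2 A3 P0.
move: (powR (W + x) (a - 2)) (powR (W + x) (a - 1)) (powR (W - x) (a - 1)) => P Q1 Q2.
move: (powR (W + y) a) (powR (W + x) a) (powR (W - y) a) (powR (W - x) a) => B1 B2 B3 B4.
move=> A1 A2 A3 P0.
have yx : 0 <= y - x by lra.
have : a * (y - x) * ((a - 1) * P * (2 * x)) <= a * (y - x) * (Q1 - Q2).
  apply: ler_wpM2l => //; apply: mulr_ge0 => //; lra.
nra.
Qed.

Lemma Gmono (W x y : R) : 0 <= x -> x <= y -> y <= W -> G W x <= G W y.
Proof.
move=> x0 xy yW. have a1' := a1.
have := RI1 x0 xy yW.
have : 0 <= 2 * a * (a - 1) * (y - x) * x * powR (W + x) (a - 2).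
  apply: mulr_ge0; last exact: powR_ge0.
  apply: mulr_ge0 => //; apply: mulr_ge0; last by lra.
  apply: mulr_ge0; last by lra. apply: mulr_ge0; lra.
move: (2 * a * (a - 1) * (y - x) * x * powR (W + x) (a - 2)) => t; lra.
Qed.

Lemma RI (W M x y : R) : 0 < M -> 0 <= x -> x <= y -> y <= W -> W - M <= x ->
  y - x <= 2 * M ->
  a * (a - 1) / 2 * (y - x) ^+ 2 * powR (4 * M) (a - 2) <= G W y - G W x.
Proof.
move=> M0 x0 xy yW WMx yx2.
have a1' := a1; have a2' := a2.
set m := (x + y) / 2.
have H1 := @Gmono W x m x0 (ltac:(rewrite /m; lra)) (ltac:(rewrite /m; lra)).
have H2 := @RI1 W m y (ltac:(rewrite /m; lra)) (ltac:(rewrite /m; lra)) yW.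
have Q : (y - x) / 2 * powR (4 * M) (a - 2) <= m * powR (W + m) (a - 2).
  have [exy|nxy] := eqVneq x y.
    rewrite exy subrr mul0r mul0r; apply: mulr_ge0; last exact: powR_ge0.
    rewrite /m; lra.
  have xly : x < y by rewrite lt_neqAle nxy xy.
  have mpos : 0 < m by rewrite /m; lra.
  have [W2M|W2M] := lerP W (2 * M).
    have : powR (4 * M) (a - 2) <= powR (W + m) (a - 2).
      apply: NM; rewrite /m; lra.
    have : (y - x) / 2 <= m by rewrite /m; lra.
    have : 0 <= powR (4 * M) (a - 2) by apply: powR_ge0.
    move: (powR (4 * M) (a - 2)) (powR (W + m) (a - 2)) => A B.
    nra.
  have h1 : powR (2 * W) (a - 2) <= powR (W + m) (a - 2).
    apply: NM; rewrite /m; lra.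
  have h2 : (2 * W) * powR (2 * W) (a - 2) = powR (2 * W) (a - 1).
    have -> : a - 2 = (a - 1) - 1 by ring.
    by rewrite mulr_powRB1 //; lra.
  have h3 : (4 * M) * powR (4 * M) (a - 2) = powR (4 * M) (a - 1).
    have -> : a - 2 = (a - 1) - 1 by ring.
    by rewrite mulr_powRB1 //; lra.
  have h4 : powR (4 * M) (a - 1) <= powR (2 * W) (a - 1).
    apply: (@ge0_ler_powR _ (a - 1)); rewrite ?nnegrE; lra.
  have h5 : W / 2 <= m by rewrite /m; lra.
  have : 0 <= powR (4 * M) (a - 2) by apply: powR_ge0.
  have : 0 <= powR (2 * W) (a - 2) by apply: powR_ge0.
  move: h1 h2 h3 h4.
  move: (powR (4 * M) (a - 2)) (powR (W + m) (a - 2)) (powR (2 * W) (a - 2)) => A B C.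
  move: (powR (4 * M) (a - 1)) (powR (2 * W) (a - 1)) => D E.
  move=> h1 h2 h3 h4 hC hA.
  have : m * C <= m * B by apply: ler_wpM2l; lra.
  nra.
have E : y - m = (y - x) / 2 by rewrite /m; field.
rewrite E in H2.
have : 2 * a * (a - 1) * ((y - x) / 2) * ((y - x) / 2 * powR (4 * M) (a - 2))
       <= 2 * a * (a - 1) * ((y - x) / 2) * (m * powR (W + m) (a - 2)).
  apply: ler_wpM2l => //; apply: mulr_ge0; last by lra.
  apply: mulr_ge0; lra.
move: H1 H2 Q.
move: (powR (4 * M) (a - 2)) (powR (W + m) (a - 2)) => A B.
move: (G W x) (G W m) (G W y) => g1 g2 g3.
move=> H1 H2 Q H3.
have -> : a * (a - 1) / 2 * (y - x) ^+ 2 * A =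
  2 * a * (a - 1) * ((y - x) / 2) * ((y - x) / 2 * A) by field.
have EE : 2 * a * (a - 1) * ((y - x) / 2) * (m * B) = 2 * a * (a - 1) * ((y - x) / 2) * m * B.
  by ring.
rewrite EE in H3.
lra.
Qed.

Lemma RII (W M x y : R) : 0 < M -> 0 <= W -> W <= x -> x <= y -> y - x <= 2 * M ->
  a / 4 * (y - x) ^+ 2 * powR (4 * M) (a - 2) <= G W y - G W x.
Proof.
move=> M0 W0 Wx xy yx2.
have a1' := a1; have a2' := a2.
rewrite /G (ger0_norm (_ : 0 <= W + y)); last by lra.
rewrite (ger0_norm (_ : 0 <= W + x)); last by lra.
rewrite (distrC W y) (distrC W x) !ger0_norm; try lra.
have h0 : powR (W + x) a <= powR (W + y) a.
  apply: (@ge0_ler_powR _ a); rewrite ?nnegrE; lra.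
set u := x - W; set v := y - W.
set m := (u + v) / 2; set h := (y - x) / 2.
have hm : h <= m by rewrite /h /m /u /v; lra.
have h0' : 0 <= h by rewrite /h; lra.
have vm : v - m = h by rewrite /m /v /u /h; lra.
have D1 := @Dlo a m v a1 (ltac:(rewrite /m /u /v; lra)) (ltac:(rewrite /m /u /v; lra)).
have D2 : powR u a <= powR m a.
  apply: (@ge0_ler_powR _ a); rewrite ?nnegrE /m /u /v; lra.
have D3 : powR h (a - 1) <= powR m (a - 1).
  apply: (@ge0_ler_powR _ (a - 1)); rewrite ?nnegrE; lra.
have D4 : h * powR (4 * M) (a - 2) <= powR h (a - 1).
  have [->|hn0] := eqVneq h 0.
    by rewrite mul0r powR_ge0.
  have hp : 0 < h by rewrite lt_neqAle eq_sym hn0 h0'.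
  have -> : powR h (a - 1) = h * powR h (a - 2).
    have -> : a - 2 = (a - 1) - 1 by ring.
    by rewrite mulr_powRB1 //; lra.
  apply: ler_wpM2l => //; apply: NM => //; rewrite /h; lra.
rewrite vm in D1.
have E : a / 4 * (y - x) ^+ 2 * powR (4 * M) (a - 2) = a * (h * powR (4 * M) (a - 2)) * h.
  by rewrite /h; move: (powR (4 * M) (a - 2)) => P; field.
rewrite E.
have : a * (h * powR (4 * M) (a - 2)) * h <= a * powR m (a - 1) * h.
  apply: ler_wpM2r => //; apply: ler_wpM2l; lra.
move: h0 D1 D2. rewrite -/u -/v.
move: (powR (W + x) a) (powR (W + y) a) (powR u a) (powR v a) (powR m a) => A B C D F.
move: (a * (h * powR (4 * M) (a - 2)) * h) (a * powR m (a - 1) * h) => X Y.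
lra.
Qed.

Lemma K (W M x y : R) : 0 < M -> 0 <= W -> 0 <= x -> x <= y ->
  `|W - x| <= M -> `|W - y| <= M ->
  a * (a - 1) / 8 * (y - x) ^+ 2 * powR (4 * M) (a - 2) <= G W y - G W x.
Proof.
move=> M0 W0 x0 xy /ler_normlP [hx1 hx2] /ler_normlP [hy1 hy2].
have a1' := a1; have a2' := a2.
have P0 : 0 <= powR (4 * M) (a - 2) by apply: powR_ge0.
have [yW|Wy] := lerP y W.
  have H := @RI W M x y M0 x0 xy yW (ltac:(lra)) (ltac:(lra)).
  apply: le_trans H; apply: ler_wpM2r => //; apply: ler_wpM2r; first exact: sqr_ge0.
  nra.
have [Wx|xW] := lerP W x.
  have H := @RII W M x y M0 W0 Wx xy (ltac:(lra)).
  apply: le_trans H; apply: ler_wpM2r => //; apply: ler_wpM2r; first exact: sqr_ge0.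
  nra.
have H1 := @RI W M x W M0 x0 (ltac:(lra)) (ltac:(lra)) (ltac:(lra)) (ltac:(lra)).
have H2 := @RII W M W y M0 W0 (ltac:(lra)) (ltac:(lra)) (ltac:(lra)).
move: H1 H2 P0; move: (powR (4 * M) (a - 2)) (G W x) (G W W) (G W y) => P g1 g2 g3.
move=> H1 H2 P0.
have E1 : a * (a - 1) / 8 * (y - x) ^+ 2 * P <=
   a * (a - 1) / 4 * ((W - x) ^+ 2 + (y - W) ^+ 2) * P.
  apply: ler_wpM2r => //.
  have : (y - x) ^+ 2 <= 2 * ((W - x) ^+ 2 + (y - W) ^+ 2).
    have -> : y - x = (W - x) + (y - W) by ring.
    move: (W - x) (y - W) => p q. have := sqr_ge0 (p - q). rewrite !expr2. nra.
  move: ((W - x) ^+ 2 + (y - W) ^+ 2) ((y - x) ^+ 2) => S Q HQ.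
  have c0 : 0 <= a * (a - 1) / 8 by nra.
  have := ler_wpM2l c0 HQ.
  have -> : a * (a - 1) / 8 * (2 * S) = a * (a - 1) / 4 * S by field.
  done.
have E2 : a * (a - 1) / 4 * (y - W) ^+ 2 * P <= a / 4 * (y - W) ^+ 2 * P.
  apply: ler_wpM2r => //; apply: ler_wpM2r; first exact: sqr_ge0. nra.
have E3 : a * (a - 1) / 4 * (W - x) ^+ 2 * P <= a * (a - 1) / 2 * (W - x) ^+ 2 * P.
  apply: ler_wpM2r => //; apply: ler_wpM2r; first exact: sqr_ge0. nra.
have E4 : a * (a - 1) / 4 * ((W - x) ^+ 2 + (y - W) ^+ 2) * P =
  a * (a - 1) / 4 * (W - x) ^+ 2 * P + a * (a - 1) / 4 * (y - W) ^+ 2 * P by ring.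
lra.
Qed.

Variable C0 : R.
Hypothesis C0pos : 0 < C0.

Definition K1 := 1 + 8 * C0 / (a * (a - 1) / 8).

Lemma K1ge1 : 1 <= K1.
Proof.
have a1' := a1; have C0' := C0pos.
rewrite /K1 lerDl; apply: divr_ge0; [lra | nra].
Qed.

Lemma PR (s x y M1 M2 M A : R) : 1 <= M -> (M = M1 \/ M = M2) ->
  `|x| <= M1 -> `|s - x| <= M2 -> `|y| <= M1 -> `|s - y| <= M2 ->
  `|powR `|x| a + powR `|s - x| a - A| <= C0 ->
  `|powR `|y| a + powR `|s - y| a - A| <= C0 ->
  s <= 2 * x -> x <= y ->
  y - x <= K1 * powR M (1 - a / 2).
Proof.
move=> M1g MM hx1 hx2 hy1 hy2 hfx hfy sx xy.
have a1' := a1; have a2' := a2; have C0' := C0pos.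
have ha0 : a != 0 by rewrite gt_eqF //; lra.
have ha10 : a - 1 != 0 by rewrite gt_eqF //; lra.
set W := `|s / 2|; set X := x - s / 2; set Y := y - s / 2.
have GX : G W X = powR `|x| a + powR `|s - x| a.
  rewrite /G /W /X; have [s0|s0] := lerP 0 s.
    rewrite (ger0_norm (_ : 0 <= s / 2)); last by lra.
    have -> : s / 2 + (x - s / 2) = x by lra.
    by have -> : s / 2 - (x - s / 2) = s - x by lra.
  rewrite (ltr0_norm (_ : s / 2 < 0)); last by lra.
  have -> : - (s / 2) + (x - s / 2) = - (s - x) by lra.
  have -> : - (s / 2) - (x - s / 2) = - x by lra.
  by rewrite !normrN addrC.
have GY : G W Y = powR `|y| a + powR `|s - y| a.
  rewrite /G /W /Y; have [s0|s0] := lerP 0 s.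
    rewrite (ger0_norm (_ : 0 <= s / 2)); last by lra.
    have -> : s / 2 + (y - s / 2) = y by lra.
    by have -> : s / 2 - (y - s / 2) = s - y by lra.
  rewrite (ltr0_norm (_ : s / 2 < 0)); last by lra.
  have -> : - (s / 2) + (y - s / 2) = - (s - y) by lra.
  have -> : - (s / 2) - (y - s / 2) = - y by lra.
  by rewrite !normrN addrC.
have bnd : forall t, s <= 2 * t -> `|t| <= M1 -> `|s - t| <= M2 -> `|W - (t - s / 2)| <= M.
  move=> t st ht1 ht2.
  move: ht1 ht2 => /ler_normlP [t1 t2] /ler_normlP [t3 t4].
  rewrite /W; have [s0|s0] := lerP 0 s.
    rewrite (ger0_norm (_ : 0 <= s / 2)); last by lra.
    case: MM => ->; apply/ler_normlP; split; lra.
  rewrite (ltr0_norm (_ : s / 2 < 0)); last by lra.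
  case: MM => ->; apply/ler_normlP; split; lra.
have M0 : 0 < M by lra.
have HK := @K W M X Y M0 (normr_ge0 _) (ltac:(rewrite /X; lra)) (ltac:(rewrite /X /Y; lra))
   (bnd x sx hx1 hx2) (bnd y (ltac:(lra)) hy1 hy2).
rewrite GX GY in HK.
have YX : Y - X = y - x by rewrite /Y /X; ring.
rewrite YX in HK.
have HK2 : a * (a - 1) / 8 * (y - x) ^+ 2 * powR (4 * M) (a - 2) <= 2 * C0.
  apply: le_trans HK _.
  move: hfx hfy => /ler_normlP [f1 f2] /ler_normlP [f3 f4]; lra.
set e := 1 - a / 2.
set E := powR M e.
clear GX GY bnd hfx hfy hx1 hx2 hy1 hy2 HK.
have E1 : 1 <= E.
  have := @ge0_ler_powR _ e (ltac:(rewrite /e; lra)) 1 M (ltac:(by rewrite nnegrE)) (ltac:(rewrite nnegrE; lra)) M1g.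
  by rewrite powR1.
have M4 : 0 < 4 * M by lra.
have PQ : powR (4 * M) (a - 2) * powR (4 * M) (2 - a) = 1.
  rewrite -powRD; last by rewrite (gt_eqF M4) /= implybT.
  have -> : a - 2 + (2 - a) = 0 by ring.
  by rewrite powRr0.
have Q4 : powR (4 * M) (2 - a) <= 4 * E ^+ 2.
  rewrite powRM; [|lra|lra].
  have -> : E ^+ 2 = powR M (2 - a).
    rewrite /E -powR_mulrn; last exact: powR_ge0.
    by rewrite -powRrM /e; congr powR; rewrite mulrBl mul1r; field.
  apply: ler_wpM2r; first exact: powR_ge0.
  apply: ler1_powR; lra.
have Kk : 0 < a * (a - 1) / 8 by apply: divr_gt0 => //; apply: mulr_gt0; lra.
have K1d : 8 * C0 / (a * (a - 1) / 8) <= K1 by rewrite /K1; lra.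
apply: (finalg Kk (ltW C0') (powR_ge0 _ _) PQ HK2 Q4 K1d K1ge1); lra.
Qed.

End An.

Lemma zrange_uniq n : uniq (zrange n).
Proof.
rewrite /zrange map_inj_uniq ?iota_uniq //.
by move=> i j /addIr [].
Qed.

Lemma count_split (T : eqType) (P Q : pred T) (l : seq T) :
  count P l = (count (fun x => P x && Q x) l + count (fun x => P x && ~~ Q x) l)%N.
Proof.
elim: l => //= x l ->; case: (P x); case: (Q x) => /=; lia.
Qed.

Lemma cluster (l : seq int) (Q : pred int) (n : nat) : uniq l ->
  (forall x y, x \in l -> y \in l -> Q x -> Q y -> x <= y -> y - x <= n%:Z) ->
  (count Q l <= (2 * n).+1)%N.
Proof.
move=> ul H.
case: (boolP (has Q l)) => [/hasP [x0 x0l Qx0]|nh]; last first.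
  by rewrite has_count -leqNgt in nh; apply: leq_trans nh _.
rewrite -size_filter.
set w := [seq x0 - n%:Z + i%:Z | i <- iota 0 (2 * n).+1].
have -> : (2 * n).+1 = size w by rewrite size_map size_iota.
apply: uniq_leq_size; first exact: filter_uniq.
move=> x; rewrite mem_filter => /andP [Qx xl].
have h1 : x - x0 <= n%:Z.
  have [le|lt] := lerP x0 x; first exact: H.
  apply: le_trans (_ : 0 <= _); [lia | by []].
have h2 : x0 - x <= n%:Z.
  have [le|lt] := lerP x x0; first exact: H.
  apply: le_trans (_ : 0 <= _); [lia | by []].
apply/mapP; exists (absz (x - x0 + n%:Z)).
  rewrite mem_iota add0n; lia.
rewrite gez0_abs; [lia | lia].
Qed.

Lemma count_allpairs_le (l1 l2 : seq int) (P : pred (int * int)) (g : int -> int) (Q : pred int) :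
  uniq l2 -> (forall a b, P (a, b) -> b = g a /\ Q a) ->
  (count P [seq (a, b) | a <- l1, b <- l2] <= count Q l1)%N.
Proof.
move=> u2 H; elim: l1 => //= x l1 IH.
rewrite count_cat; apply: leq_add => //.
rewrite count_map.
apply: (@leq_trans (count (fun b => (b == g x) && Q x) l2)).
  apply: sub_count => b /= Pb; have [-> ->] := H _ _ Pb; by rewrite eqxx.
case: (Q x) => /=.
  rewrite (eq_count (a2 := pred1 (g x))); last by move=> b; rewrite andbT.
  by rewrite (count_uniq_mem _ u2) leq_b1.
by rewrite (eq_count (a2 := pred0)) ?count_pred0 // => b; rewrite andbF.
Qed.

Section Core.
Variables (R : realType) (a C0 : R).

Lemma cvn (z : int) (n : nat) : `|z| <= n%:Z -> `|z%:~R : R| <= n%:R.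
Proof. by move=> h; rewrite -intr_norm -[n%:R]/((n%:Z)%:~R) ler_int. Qed.

Lemma apowE (z : int) : apow a z = powR `|z%:~R : R| a.
Proof. by rewrite /apow intr_norm. Qed.

Lemma PRz (a1 : 1 < a) (a2 : a < 2) (C0pos : 0 < C0) (s x y : int) (M1 M2 : nat) (A : R) :
  (1 <= M1)%N -> (1 <= M2)%N ->
  `|x| <= M1%:Z -> `|s - x| <= M2%:Z -> `|apow a x + apow a (s - x) - A| <= C0 ->
  `|y| <= M1%:Z -> `|s - y| <= M2%:Z -> `|apow a y + apow a (s - y) - A| <= C0 ->
  s <= 2 * x -> x <= y ->
  (y - x)%:~R <= K1 a C0 * powR (minn M1 M2)%:R (1 - a / 2).
Proof.
move=> hM1 hM2 hx1 hx2 hx3 hy1 hy2 hy3 sx xy.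
rewrite !apowE !rmorphB /= in hx3 hy3.
rewrite rmorphB /=.
apply: (PR a1 a2 C0pos (s := s%:~R) (x := x%:~R) (y := y%:~R) (A := A) (M1 := M1%:R) (M2 := M2%:R)).
- by rewrite ler1n leq_min hM1 hM2.
- by case: (leqP M1 M2) => h; [left | right].
- exact: cvn.
- by rewrite -rmorphB; apply: cvn.
- exact: cvn.
- by rewrite -rmorphB; apply: cvn.
- exact: hx3.
- exact: hy3.
- by rewrite -[2 : R]/((2 : int)%:~R) -rmorphM ler_int.
- by rewrite ler_int.
Qed.

Definition Qc (s : int) (M1 M2 : nat) (A : R) (x : int) : bool :=
  [&& `|x| <= M1%:Z, `|s - x| <= M2%:Z & `|apow a x + apow a (s - x) - A| <= C0].

Lemma core (a1 : 1 < a) (a2 : a < 2) (C0pos : 0 < C0) (s : int) (M1 M2 : nat) (A : R) :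
  (1 <= M1)%N -> (1 <= M2)%N ->
  (count (Qc s M1 M2 A) (zrange M1))%:R <= (4 * K1 a C0 + 2) * powR (minn M1 M2)%:R (1 - a / 2).
Proof.
move=> hM1 hM2.
set E := powR (minn M1 M2)%:R (1 - a / 2).
set D := K1 a C0 * E.
have K1g := K1ge1 a1 C0pos.
have E1 : 1 <= E.
  have := @ge0_ler_powR _ (1 - a / 2) (ltac:(lra)) 1 (minn M1 M2)%:R (ltac:(by rewrite nnegrE)) (ltac:(by rewrite nnegrE)).
  rewrite powR1; apply; by rewrite ler1n leq_min hM1 hM2.
have D0 : 0 <= D by rewrite /D; apply: mulr_ge0; lra.
set n := absz (Num.floor D).
have fl0 : 0 <= Num.floor D by rewrite floor_ge0.
have nE : n%:Z = Num.floor D by rewrite /n gez0_abs.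
have nD : n%:R <= D.
  by rewrite -[n%:R]/((n%:Z)%:~R) nE floor_le.
have rightg : forall (P1 P2 : nat), (1 <= P1)%N -> (1 <= P2)%N -> minn P1 P2 = minn M1 M2 ->
    forall x y, Qc s P1 P2 A x -> Qc s P1 P2 A y -> s <= 2 * x -> x <= y -> y - x <= n%:Z.
  move=> P1 P2 hP1 hP2 mP x y /and3P [hx1 hx2 hx3] /and3P [hy1 hy2 hy3] sx xy.
  rewrite nE floor_ge_int.
  have := (PRz a1 a2 C0pos hP1 hP2 hx1 hx2 hx3 hy1 hy2 hy3 sx xy).
  by rewrite mP.
have right := rightg M1 M2 hM1 hM2 erefl.
have left : forall x y, Qc s M1 M2 A x -> Qc s M1 M2 A y -> 2 * y < s -> x <= y -> y - x <= n%:Z.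
  move=> x y hx hy ys xy.
  have -> : y - x = (s - x) - (s - y) by ring.
  apply: (rightg M2 M1 hM2 hM1 (minnC _ _)).
  - move: hy => /and3P [h1 h2 h3]; apply/and3P; split => //.
    + by have -> : s - (s - y) = y by ring.
    + have -> : s - (s - y) = y by ring.
      by rewrite (addrC (apow a (s - y))).
  - move: hx => /and3P [h1 h2 h3]; apply/and3P; split => //.
    + by have -> : s - (s - x) = x by ring.
    + have -> : s - (s - x) = x by ring.
      by rewrite (addrC (apow a (s - x))).
  - lia.
  - lia.
have c1 : (count (fun x => Qc s M1 M2 A x && (s <= 2 * x)%R) (zrange M1) <= (2 * n).+1)%N.
  apply: cluster; first exact: zrange_uniq.
  move=> x y _ _ /andP [hx sx] /andP [hy sy] xy; exact: right.
have c2 : (count (fun x => Qc s M1 M2 A x && ~~ (s <= 2 * x)%R) (zrange M1) <= (2 * n).+1)%N.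
  apply: cluster; first exact: zrange_uniq.
  move=> x y _ _ /andP [hx sx] /andP [hy sy] xy; apply: left => //.
  by rewrite -ltNge in sy.
rewrite (count_split _ (fun x => s <= 2 * x)).
apply: (@le_trans _ _ ((2 * n).+1 + (2 * n).+1)%:R).
  by rewrite ler_nat leq_add.
have -> : ((2 * n).+1 + (2 * n).+1)%:R = 4 * (n%:R : R) + 2.
  by rewrite natrD !mulrSr natrM /=; ring.
have : 4 * (n%:R : R) + 2 <= 4 * D + 2 by lra.
move=> h; apply: (le_trans h); rewrite /D mulrDl mulrA; lra.
Qed.
End Core.

Theorem corollary2p8 (R : realType) :
  exists c0 : R, 0 < c0 < 1 /\
  forall alpha c C0 : R, 1 < alpha < 2 -> 0 < c < c0 -> 0 < C0 ->
  exists C : R, 0 < C /\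
  forall (N N1 N2 N3 : nat) (m : R),
    dyadic N -> dyadic N1 -> dyadic N2 -> dyadic N3 ->
    (1 <= N1 <= N)%N -> (1 <= N2 <= N)%N -> (1 <= N3 <= N)%N ->
    (forall k k2 : int,
        (size (S_kk2_bad alpha m C0 c N N1 N2 N3 k k2))%:R
          <= C * powR (minn N1 N3)%:R (1 - alpha / 2)
     /\ (size (S_kk2 alpha m C0 N N1 N2 N3 k k2))%:R
          <= C * powR (minn N1 N3)%:R (1 - alpha / 2))
    /\
    (forall k1 k3 : int,
        (size (S_k1k3_bad alpha m C0 c N N1 N2 N3 k1 k3))%:R
          <= C * powR (minn N N2)%:R (1 - alpha / 2)
     /\ (size (S_k1k3 alpha m C0 N N1 N2 N3 k1 k3))%:R
          <= C * powR (minn N N2)%:R (1 - alpha / 2)).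
Proof.
exists (1 / 2); split; first by apply/andP; split; lra.
move=> alpha c C0 /andP [a1 a2] _ C0pos.
exists (4 * K1 alpha C0 + 2); split.
  have := K1ge1 a1 C0pos; lra.
move=> N N1 N2 N3 m _ _ _ _ /andP [h1 h1N] /andP [h2 h2N] /andP [h3 h3N].
have hN : (1 <= N)%N by apply: leq_trans h1N.
split.
- move=> k k2.
  have B : (size (S_kk2 alpha m C0 N N1 N2 N3 k k2))%:R
      <= (4 * K1 alpha C0 + 2) * powR (minn N1 N3)%:R (1 - alpha / 2).
    apply: le_trans (core a1 a2 C0pos (k + k2) (apow alpha k2 + apow alpha k + m) h1 h3).
    rewrite ler_nat /S_kk2 size_filter.
    apply: (@count_allpairs_le _ _ _ (fun a => k + k2 - a)); first exact: zrange_uniq.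
    move=> a b /=; rewrite /inS => /and5P [/eqP hk _ _ hC /and4P [_ ha _ hb]].
    have hb' : b = k + k2 - a by rewrite hk; ring.
    split => //; apply/and3P; split => //; first by rewrite -hb'.
    rewrite -hb'.
    by have -> : apow alpha a + apow alpha b - (apow alpha k2 + apow alpha k + m) =
      apow alpha a - apow alpha k2 + apow alpha b - apow alpha k - m by ring.
  split => //; apply: le_trans B; rewrite ler_nat /S_kk2_bad size_filter; exact: count_size.
- move=> k1 k3.
  have B : (size (S_k1k3 alpha m C0 N N1 N2 N3 k1 k3))%:R
      <= (4 * K1 alpha C0 + 2) * powR (minn N N2)%:R (1 - alpha / 2).
    apply: le_trans (core a1 a2 C0pos (k1 + k3) (apow alpha k1 + apow alpha k3 - m) hN h2).
    rewrite ler_nat /S_k1k3 size_filter.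
    apply: (@count_allpairs_le _ _ _ (fun a => k1 + k3 - a)); first exact: zrange_uniq.
    move=> a b /=; rewrite /inS => /and5P [/eqP hk _ _ hC /and4P [ha _ hb _]].
    have hb' : b = k1 + k3 - a by rewrite hk; ring.
    split => //; apply/and3P; split => //; first by rewrite -hb'.
    rewrite -hb' -normrN.
    by have -> : - (apow alpha a + apow alpha b - (apow alpha k1 + apow alpha k3 - m)) =
      apow alpha k1 - apow alpha b + apow alpha k3 - apow alpha a - m by ring.
  split => //; apply: le_trans B; rewrite ler_nat /S_k1k3_bad size_filter; exact: count_size.
Qed.
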